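(* Let $K\ge1$ be an integer and let $s:[0,\infty)\to\mathbb{R}$ be differentiable with $s(0)=s'(0)=0$, convex on $[0,K]$, and with $s(j)\neq0$ for some $j\in\{1,\dots,K\}$. Define $$\mathsf{Eff}_K=\frac{1}{K+1}\cdot\frac{\sum_{j=1}^K(K+1-j)\,s(j)^2}{\sum_{j=1}^K(K+1-j)\,s(j)},\qquad \mathsf{Eff}^{\mathrm{lb}}_k=\frac{1}{k+1}\,s\!\left(\frac{k+1}{2}\right),\ k\ge0.$$ Then $\mathsf{Eff}_K\ge\mathsf{Eff}^{\mathrm{lb}}_K$, and $k\mapsto\mathsf{Eff}^{\mathrm{lb}}_k$ is non-decreasing on $\{0,1,\dots,K\}$. *)

(* Defs.v *)
From HB Require Import structures.
From mathcomp Require Import all_boot all_order all_algebra.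
From mathcomp Require Import all_classical all_reals all_analysis.
Set Implicit Arguments. Unset Strict Implicit. Unset Printing Implicit Defensive.
Import Order.TTheory GRing.Theory Num.Theory.
Import numFieldNormedType.Exports.
Local Open Scope ring_scope.

Definition Eff (R : realType) (s : R -> R) (K : nat) : R :=
  (K.+1%:R)^-1 *
  ((\sum_(1 <= j < K.+1) (K.+1 - j)%:R * (s j%:R) ^+ 2) /
   (\sum_(1 <= j < K.+1) (K.+1 - j)%:R * s j%:R)).

Definition Eff_lb (R : realType) (s : R -> R) (k : nat) : R :=
  (k.+1%:R)^-1 * s (k.+1%:R / 2).

(* Main.v *)
Require Import Defs.
From HB Require Import structures.
From mathcomp Require Import all_boot all_order all_algebra.
From mathcomp Require Import all_classical all_reals all_analysis.
From mathcomp Require Import ring lra.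
Import Order.TTheory GRing.Theory Num.Theory.
Import numFieldNormedType.Exports.
Local Open Scope classical_set_scope.
Local Open Scope ring_scope.

Lemma conv3 {R : realType} {K : R} {s : R -> R}
  (hconv : convex_function (E := R^o) `[0, K] s) x y z :
  0 <= x -> x < y -> y < z -> z <= K ->
  s y * (z - x) <= s x * (z - y) + s z * (y - x).
Proof.
move=> x0 xy yz zK.
have zx : 0 < z - x by lra.
have t0 : 0 <= (z - y) / (z - x) by rewrite divr_ge0 //; lra.
have t1 : (z - y) / (z - x) <= 1 by rewrite ler_pdivrMr //; lra.
have hx : x \in `[0, K]%classic by rewrite inE /= in_itv /=; apply/andP; split; lra.
have hz : z \in `[0, K]%classic by rewrite inE /= in_itv /=; apply/andP; split; lra.
have := hconv (Itv01 t0 t1) x z hx hz.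
move=> H.
rewrite [X in s X]convRE [X in _ <= X]convRE /= /unstable.onem in H.
have ey : (z - y) / (z - x) * x + (1 - (z - y) / (z - x)) * z = y by field; lra.
rewrite ey in H.
have e : s y * (z - x) <= ((z - y) / (z - x) * s x + (1 - (z - y) / (z - x)) * s z) * (z - x).
  by rewrite ler_pM2r.
apply: (le_trans e); rewrite le_eqVlt; apply/orP; left; apply/eqP.
by field; lra.
Qed.

Lemma ratio {R : realType} {K : R} {s : R -> R}
  (hconv : convex_function (E := R^o) `[0, K] s) (hs0 : s 0 = 0) x y :
  0 < x -> x <= y -> y <= K -> s x * y <= s y * x.
Proof.
move=> x0 xy yK; have [->|xy'] := eqVneq x y; first by rewrite mulrC.
have xy2 : x < y by rewrite lt_neqAle xy' xy.
have := conv3 hconv _ _ _ (lexx (0:R)) x0 xy2 yK.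
rewrite hs0 mul0r add0r !subr0 => H; lra.
Qed.

Lemma s_ge0 {R : realType} {K : R} {s : R -> R}
  (hconv : convex_function (E := R^o) `[0, K] s) (hs0 : s 0 = 0)
  (hds0 : (fun h : R => h^-1 * (s h - s 0)) @ 0^'+ --> (0 : R)) x :
  0 < x -> x <= K -> 0 <= s x.
Proof.
move=> x0 xK; rewrite leNgt; apply/negP => sx.
pose e := - s x / x.
have e0 : 0 < e by rewrite /e divr_gt0 //; lra.
move/cvgrPdist_lt: hds0 => /(_ e e0) H.
have HH : \forall h \near 0^'+, (0 < h /\ h < x) /\ `|0 - h^-1 * (s h - s 0)| < e.
  near=> h; split; [split|].
  - near: h; exact: nbhs_right_gt.
  - near: h; exact: nbhs_right_lt.
  - near: h; exact: H.
have [h [[h0 hx] hh]] := filter_ex HH.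
have := ratio hconv hs0 _ _ h0 (ltW hx) xK.
rewrite hs0 subr0 sub0r normrN in hh.
move=> r.
have : h^-1 * s h <= - e.
  rewrite /e mulNr opprK mulrC ler_pdivrMr // mulrAC ler_pdivlMr //.
move: hh; rewrite ltr_norml. lra.
Unshelve. all: end_near.
Qed.

Theorem mainTheorem5 (R : realType) (K : nat) (s : R -> R)
  (hK : (1 <= K)%N)
  (hdiff : forall x : R, 0 < x -> derivable s x 1)
  (hs0 : s 0 = 0)
  (hds0 : (fun h : R => h^-1 * (s h - s 0)) @ 0^'+ --> (0 : R))
  (hconv : convex_function (E := R^o) `[0, K%:R] s)
  (hnz : exists j : nat, [/\ (1 <= j)%N, (j <= K)%N & s j%:R != 0]) :
  Eff_lb s K <= Eff s K /\
  (forall k1 k2 : nat, (k1 <= k2)%N -> (k2 <= K)%N -> Eff_lb s k1 <= Eff_lb s k2).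
Proof.
have hsge0 : forall x : R, 0 < x -> x <= K%:R -> 0 <= s x := s_ge0 hconv hs0 hds0.
have hrat : forall x y : R, 0 < x -> x <= y -> y <= K%:R -> s x * y <= s y * x :=
  ratio hconv hs0.
have K1 : 1 <= K%:R :> R by rewrite ler1n.
have eK : K.+1%:R = K%:R + 1 :> R by rewrite -natr1.
split; last first.
  move=> k1 k2 k12 k2K; rewrite /Eff_lb.
  have a1 : 1 <= k1.+1%:R :> R by rewrite ler1n.
  have ab : k1.+1%:R <= k2.+1%:R :> R by rewrite ler_nat.
  have bK : k2.+1%:R <= K%:R + 1 :> R by rewrite -natr1 lerD2r ler_nat.
  set a : R := k1.+1%:R in a1 ab *; set b : R := k2.+1%:R in ab bK *.
  have H := hrat (a/2) (b/2) ltac:(lra) ltac:(lra) ltac:(lra).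
  rewrite mulrC ler_pdivrMr; last lra.
  rewrite -mulrA [b^-1 * _]mulrC ler_pdivlMr; last lra.
  rewrite !mulrA in H; lra.


pose m : R := K.+1%:R / 2.
pose p : R := K%:R / 2.
have mK : m <= K%:R by rewrite /m eK; lra.
have smge0 : 0 <= s m by apply: hsge0; rewrite /m ?eK; lra.
have spm : s p <= s m.
  have H := hrat p m ltac:(rewrite /p; lra) ltac:(rewrite /p /m eK; lra) mK.
  rewrite /m /p eK in H smge0 *.
  nra.
pose c := 2 * (s m - s p).
have c0 : 0 <= c by rewrite /c; lra.
have key : forall X : R, 1 <= X -> X <= K%:R -> (X <= p \/ m <= X) ->
    c * (X - m) <= s X - s m.
  move=> X X1 XK [Xp|mX].
  - have [Xp'|pX|->] := ltrgtP X p; [|lra|]; last first.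
      by rewrite /c /m /p eK; lra.
    have H := conv3 hconv X p m ltac:(lra) Xp'
       ltac:(rewrite /p /m eK; lra) mK.
    have E1 : m - p = 1/2 by rewrite /m /p eK; field.
    rewrite E1 in H.
    have E2 : c * (X - m) = 2 * s m * (X - m) - 2 * s p * (X - m) by rewrite /c; ring.
    rewrite E2.
    have E3 : p - X = (m - X) - 1/2 by rewrite -E1; ring.
    rewrite E3 in H.
    nra.
  - have [mX'|Xm|->] := ltrgtP m X; [|lra|]; last by rewrite subrr mulr0 subrr.
    have H := conv3 hconv p m X ltac:(rewrite /p; lra)
       ltac:(rewrite /p /m eK; lra) mX' XK.
    have E1 : m - p = 1/2 by rewrite /m /p eK; field.
    rewrite E1 in H.
    have E3 : X - p = (X - m) + 1/2 by rewrite -E1; ring.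
    rewrite E3 in H.
    rewrite /c.
    nra.

have Wsub : forall j, (j <= K.+1)%N -> (K.+1 - j)%:R = K%:R + 1 - j%:R :> R.
  by move=> j hj; rewrite natrB // eK.
have Fge0 : forall i, (1 <= i <= K)%N -> 0 <= (K.+1 - i)%:R * s i%:R.
  move=> i /andP[i1 iK]; apply: mulr_ge0; first exact: ler0n.
  apply: hsge0; first by rewrite ltr0n.
  by rewrite ler_nat.
pose S1 := \sum_(1 <= j < K.+1) (K.+1 - j)%:R * s j%:R.
pose S2 := \sum_(1 <= j < K.+1) (K.+1 - j)%:R * (s j%:R) ^+ 2.
have S1pos : 0 < S1.
  case: hnz => j0 [j01 j0K sj0].
  have SE : S1 = \sum_(1 <= i < j0) (K.+1 - i)%:R * s i%:R +
      ((K.+1 - j0)%:R * s j0%:R + \sum_(j0.+1 <= i < K.+1) (K.+1 - i)%:R * s i%:R).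
    rewrite /S1 (big_cat_nat (n := j0)) //; last by apply: leqW.
    by rewrite (big_ltn (m := j0)) // ltnS.
  rewrite SE.
  have A : 0 <= \sum_(1 <= i < j0) (K.+1 - i)%:R * s i%:R :> R.
    rewrite big_seq; apply: sumr_ge0 => i; rewrite mem_index_iota => /andP[i1 ij].
    apply: Fge0; rewrite i1 /=; apply: ltnW; exact: leq_trans ij j0K.
  have B : 0 <= \sum_(j0.+1 <= i < K.+1) (K.+1 - i)%:R * s i%:R :> R.
    rewrite big_seq; apply: sumr_ge0 => i; rewrite mem_index_iota => /andP[i1 ij].
    apply: Fge0; rewrite ltnS in ij; rewrite ij andbT; exact: leq_trans j01 (ltnW i1).
  have C : 0 < (K.+1 - j0)%:R * s j0%:R :> R.
    apply: mulr_gt0; first by rewrite ltr0n subn_gt0 ltnS.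
    rewrite lt_def sj0 /=; apply: hsge0; first by rewrite ltr0n.
    by rewrite ler_nat.
  lra.
pose T := \sum_(1 <= j < K.+1) (K.+1 - j)%:R * s j%:R * (j%:R - m).
have T0 : 0 <= T.
  have ET : T = \sum_(1 <= j < K.+1)
      (K.+1 - (K.+1 - j))%:R * s (K.+1 - j)%:R * ((K.+1 - j)%:R - m).
    rewrite /T big_nat_rev /=; apply: eq_big_nat => j _.
    by rewrite add1n subSS.
  have : 0 <= \sum_(1 <= j < K.+1)
      ((K.+1 - j)%:R * s j%:R * (j%:R - m) +
       (K.+1 - (K.+1 - j))%:R * s (K.+1 - j)%:R * ((K.+1 - j)%:R - m)).
    rewrite big_seq; apply: sumr_ge0 => j; rewrite mem_index_iota => /andP[j1 jK].
    rewrite ltnS in jK.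
    rewrite subKn; last exact: leqW.
    rewrite Wsub; last exact: leqW.
    have X1 : 1 <= j%:R :> R by rewrite ler1n.
    have XK : j%:R <= K%:R :> R by rewrite ler_nat.
    set X : R := j%:R in X1 XK *.
    have E : (K%:R + 1 - X) * s X * (X - m) + X * s (K%:R + 1 - X) * (K%:R + 1 - X - m)
       = (X - (K%:R + 1 - X)) * ((K%:R + 1 - X) * s X - X * s (K%:R + 1 - X)) / 2.
      by rewrite /m eK; field.
    rewrite E; apply: divr_ge0; last lra.
    have [XY|YX] := lerP X (K%:R + 1 - X).
    + have H := hrat X (K%:R + 1 - X) ltac:(lra) XY ltac:(lra).
      apply: mulr_le0; lra.
    + have H := hrat (K%:R + 1 - X) X ltac:(lra) ltac:(lra) XK.
      apply: mulr_ge0; lra.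
  rewrite big_split /= -ET -/T; lra.
have main : c * T <= S2 - s m * S1.
  rewrite /T mulr_sumr /S1 mulr_sumr /S2 -sumrB; apply: ler_sum_nat => j /andP[j1 jK].
  rewrite ltnS in jK.
  have h0 : 0 <= (K.+1 - j)%:R * s j%:R by apply: Fge0; rewrite j1.
  have hk := key j%:R ltac:(by rewrite ler1n) ltac:(by rewrite ler_nat).
  have : j%:R <= p \/ m <= j%:R.
    have h2 : (j.*2)%:R = 2 * j%:R :> R by rewrite -muln2 natrM mulrC.
    case: (leqP (j.*2) K) => hj; [left|right].
      move: hj; rewrite -(ler_nat R) h2 /p => hj; lra.
    move: hj; rewrite -(ler_nat R) h2 eK /m => hj; lra.
  move=> /hk {}hk.
  have := ler_wpM2l h0 hk.
  set W := (K.+1 - j)%:R; set Y := s j%:R.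
  have E1 : c * (W * Y * (j%:R - m)) = W * Y * (c * (j%:R - m)) by ring.
  have E2 : W * Y ^+ 2 - s m * (W * Y) = W * Y * (Y - s m) by ring.
  by rewrite E1 E2.
rewrite /Eff_lb /Eff -/S1 -/S2 ler_pM2l ?invr_gt0 ?ltr0n //.
rewrite ler_pdivlMr //.
have := mulr_ge0 c0 T0.
rewrite -/m. lra.
Qed.
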